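(* Let $P\subseteq\mathbb{R}^d$ be finite. Suppose there is a point $\mathbf{p}=(p_1,\dots,p_d)\in P$ such that for each $i\in\{1,\dots,d\}$ either $p_i=\max\{q_i:\mathbf{q}\in P\}$ or $p_i=\min\{q_i:\mathbf{q}\in P\}$. Then $\mathbf{p}$ is a leaf node in every optimal Steiner tree of $P$.
   Context: For a finite set $P\subset\mathbb{R}^d$ (the terminals), a Steiner tree of $P$ is a tree whose vertex set is $P\cup S$ for some finite $S\subset\mathbb{R}^d$ (the Steiner points), with edge lengths the Euclidean distances between endpoints; its cost is the total edge length. An optimal Steiner tree is one of minimum cost. By convention, optimal Steiner trees contain no trivial Steiner points (Steiner points of degree $2$ that merely subdivide a straight segment). *)

(* Defs.v *)
From HB Require Import structures.
From mathcomp Require Import all_boot all_order all_algebra.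
From mathcomp Require Export finmap.
From mathcomp Require Export reals.

Set Implicit Arguments.
Unset Strict Implicit.
Unset Printing Implicit Defensive.

Import Order.TTheory GRing.Theory Num.Theory.
Local Open Scope ring_scope.
Local Open Scope fset_scope.

Section Steiner.
Variables (R : realType) (d : nat).

Notation point := 'rV[R]_d.

Definition edist (x y : point) : R :=
  Num.sqrt (\sum_(i < d) (x 0 i - y 0 i) ^+ 2).

(* A finite geometric graph: vertices are points of R^d, edges are pairs of
   points; an edge (x,y) stands for the unordered edge {x,y}. *)
Record sgraph := SGraph { sgV : {fset point}; sgE : {fset point * point} }.

Definition adj (G : sgraph) : rel point :=
  fun x y => ((x, y) \in sgE G) || ((y, x) \in sgE G).

Definition is_tree (G : sgraph) : Prop :=
  [/\ forall e, e \in sgE G -> [/\ e.1 \in sgV G, e.2 \in sgV G & e.1 != e.2],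
      forall x y, (x, y) \in sgE G -> (y, x) \notin sgE G,
      forall x y, x \in sgV G -> y \in sgV G ->
        exists s : seq point, path (adj G) x s /\ last x s = y
    & forall c : seq point, (3 <= size c)%N -> uniq c -> ~~ cycle (adj G) c].

Definition cost (G : sgraph) : R :=
  \sum_(e <- enum_fset (sgE G)) edist e.1 e.2.

Definition degree (G : sgraph) (x : point) : nat :=
  #|` [fset e in sgE G | (e.1 == x) || (e.2 == x)]|.

Definition steiner_tree (P : {fset point}) (G : sgraph) : Prop :=
  P `<=` sgV G /\ is_tree G.

Definition trivial_steiner (P : {fset point}) (G : sgraph) (s : point) : Prop :=
  [/\ s \in sgV G, s \notin P, degree G s = 2%N &
      exists a b (t : R), [/\ adj G s a, adj G s b, a != b,
                            0 <= t <= 1 & s = ((1 - t) *: a + t *: b)%R]].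

(* optimal Steiner tree (with the convention: no trivial Steiner points) *)
Definition optimal_steiner (P : {fset point}) (G : sgraph) : Prop :=
  [/\ steiner_tree P G,
      forall s, ~ trivial_steiner P G s &
      forall G', steiner_tree P G' -> cost G <= cost G'].

End Steiner.

(* Main.v *)
Require Import Defs.
From HB Require Import structures.
From mathcomp Require Import all_boot all_order all_algebra finmap reals.
From mathcomp Require Import ring lra.
Import Order.TTheory GRing.Theory Num.Theory.
Local Open Scope ring_scope.
Local Open Scope fset_scope.
Set Implicit Arguments.
Unset Strict Implicit.
Unset Printing Implicit Defensive.
Section Graph.
Variables (R : realType) (d : nat).
Notation point := 'rV[R]_d.
Implicit Types (G : sgraph R d) (f : point -> point).

Definition gmap f G := SGraph (f @` sgV G) ((fun e => (f e.1, f e.2)) @` sgE G).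

Definition pinv f (V : {fset point}) y := nth y V (find (fun x => f x == y) V).

Lemma pinvK f (V : {fset point}) x : {in V &, injective f} -> x \in V ->
  pinv f V (f x) = x.
Proof.
move=> inj xV; rewrite /pinv.
have hh : has (fun z => f z == f x) V by apply/hasP; exists x.
have hl : (find (fun z => f z == f x) V < size V)%N by rewrite -has_find.
have := nth_find (f x) hh; have := mem_nth (f x) hl.
move=> m /eqP e; exact: inj.
Qed.
End Graph.
Section Graph2.
Variables (R : realType) (d : nat).
Notation point := 'rV[R]_d.
Implicit Types (G : sgraph R d) (f : point -> point).

Lemma tree_edge G e : is_tree G -> e \in sgE G -> [/\ e.1 \in sgV G, e.2 \in sgV G & e.1 != e.2].
Proof. by case=> h _ _ _; apply: h. Qed.

Lemma adj_in G x y : is_tree G -> adj G x y -> x \in sgV G /\ y \in sgV G.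
Proof.
move=> T /orP[] /(tree_edge T) [] /= ? ? _ //.
Qed.

Lemma gmap_adj f G x y : adj G x y -> adj (gmap f G) (f x) (f y).
Proof.
rewrite /adj /= => /orP[] h; apply/orP; [left|right];
  exact: (in_imfset _ (fun e : point * point => (f e.1, f e.2)) h).
Qed.

Lemma gmap_adjE f G y z : is_tree G -> {in sgV G &, injective f} ->
  adj (gmap f G) y z -> adj G (pinv f (sgV G) y) (pinv f (sgV G) z).
Proof.
move=> T inj; rewrite /adj /= => /orP[] /imfsetP [[a b]] /= ab [-> ->];
  have [? ? _] := tree_edge T ab; by rewrite !pinvK // ?ab ?orbT.
Qed.

Lemma gmap_tree f G : is_tree G -> {in sgV G &, injective f} -> is_tree (gmap f G).
Proof.
move=> T inj; have T' := T; case: T' => [h1 h2 h3 h4]; split.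
- move=> e /imfsetP [[a b]] /= ab ->; have [a1 b1 nab] := h1 _ ab.
  split; rewrite /= ?in_imfset //.
  by apply: contra nab => /eqP /inj ->.
- move=> x y /imfsetP [[a b]] /= ab [-> ->]; apply/negP => /imfsetP [[a' b']] /= ab' [].
  have [? ? _] := h1 _ ab; have [? ? _] := h1 _ ab'.
  move=> /inj e1 /inj e2; move: ab'; rewrite -e1 // -e2 // => ba.
  by move: (h2 _ _ ab); rewrite ba.
- move=> x y /imfsetP [a aV ->] /imfsetP [b bV ->].
  have [s [ps ls]] := h3 _ _ aV bV.
  exists (map f s); split; last by rewrite last_map ls.
  rewrite path_map; apply: sub_path ps => u v /=; exact: gmap_adj.
- move=> c c3 uc; apply/negP => cc.
  have cV : forall y, y \in c -> y \in f @` sgV G.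
    move=> y yc; have := next_cycle cc yc; rewrite /adj /= => /orP[] /imfsetP [[a b]] /= ab [ea eb].
      by rewrite ea in_imfset //; case: (h1 _ ab).
    by rewrite eb in_imfset //; case: (h1 _ ab).
  have := h4 (map (pinv f (sgV G)) c); rewrite size_map => /(_ c3).
  rewrite map_inj_in_uniq; last first.
    move=> y z /cV /imfsetP [a aV ->] /cV /imfsetP [b bV ->].
    by rewrite !pinvK // => ->.
  move=> /(_ uc) /negP; apply.
  rewrite cycle_map; apply: sub_cycle cc => u v /=; exact: gmap_adjE.
Qed.

Definition addleaf G s p := SGraph (p |` sgV G) ((s, p) |` sgE G).

Lemma addleaf_tree G s p : is_tree G -> s \in sgV G -> p \notin sgV G -> is_tree (addleaf G s p).
Proof.
move=> T sV pV; have T' := T; case: T' => [h1 h2 h3 h4].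
have nsp : s != p by apply: contraNneq pV => <-.
have noE : forall x, (x, p) \notin sgE G /\ (p, x) \notin sgE G.
  by move=> x; split; apply/negP => /h1 [] /= ; rewrite (negbTE pV).
have adjE : forall x y, adj (addleaf G s p) x y -> adj G x y \/ (x = s /\ y = p) \/ (x = p /\ y = s).
  move=> x y; rewrite /adj /= !inE => /orP[]/orP[].
  - by case/eqP => -> ->; right; left.
  - by move=> h; left; rewrite h.
  - by case/eqP => -> ->; right; right.
  - by move=> h; left; rewrite h orbT.
have adjL : forall x y, adj G x y -> adj (addleaf G s p) x y.
  by move=> x y; rewrite /adj /= !inE => /orP[]->; rewrite ?orbT.
have adjsp : adj (addleaf G s p) s p by rewrite /adj /= !inE eqxx.
have adjps : adj (addleaf G s p) p s by rewrite /adj /= !inE eqxx orbT.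
split.
- move=> e; rewrite /= !inE => /orP[/eqP -> | eE] /=.
    by rewrite eqxx sV orbT nsp.
  by have [? ? ?] := h1 _ eE; split; rewrite // orbC ?inE; apply/orP; left.
- move=> x y; rewrite /= !inE => /orP[/eqP [-> ->] | xy].
    by rewrite xpair_eqE eq_sym (negbTE nsp) /=; case: (noE s).
  apply/negP => /orP[/eqP [ey ex] | yx]; first by move: xy; rewrite ex ey; case: (noE s) => _ /negbTE ->.
  by move: (h2 _ _ xy); rewrite yx.
- have lift : forall x y, x \in sgV G -> y \in sgV G -> exists s0 : seq point,
      path (adj (addleaf G s p)) x s0 /\ last x s0 = y.
    move=> x y xV yV; have [s0 [ps ls]] := h3 _ _ xV yV; exists s0; split => //.
    by apply: sub_path ps.
  move=> x y; rewrite /= !inE => /orP[/eqP -> | xV] /orP[/eqP -> | yV].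
  + by exists [::].
  + have [s0 [ps ls]] := lift _ _ sV yV; exists (s :: s0); split => //=.
    by rewrite adjps.
  + have [s0 [ps ls]] := lift _ _ xV sV; exists (rcons s0 p); split.
      by rewrite rcons_path ps ls.
    by rewrite last_rcons.
  + exact: lift.
- move=> c c3 uc; apply/negP => cc; case: (boolP (p \in c)) => pc.
    case: (rot_to pc) => i r er.
    have : cycle (adj (addleaf G s p)) (p :: r) by rewrite -er rot_cycle.
    have : uniq (p :: r) by rewrite -er rot_uniq.
    have : (3 <= size (p :: r))%N by rewrite -er size_rot.
    case: r {er} => [|r0 r] //= s3 /and3P [_ nr0 _] /andP [a0].
    rewrite rcons_path => /andP [_ al].
    have lp : forall z, adj (addleaf G s p) p z -> z = s.
      move=> z /adjE [|[[e _]|[_ ->]]] //; last by move: nsp; rewrite e eqxx.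
      by rewrite /adj; case: (noE z) => /negbTE -> /negbTE ->.
    have lp' : forall z, adj (addleaf G s p) z p -> z = s.
      move=> z /adjE [|[[-> _]|[_ e]]] //; last by move: nsp; rewrite -e eqxx.
      by rewrite /adj; case: (noE z) => /negbTE -> /negbTE ->.
    have e0 := lp _ a0; have e1 := lp' _ al.
    move: nr0 s3 e1; clear al; case: r => [|r1 r] //= nr0 _ e1.
    by move: nr0; rewrite e0 -e1 /= mem_last.
  move: (h4 c c3 uc) => /negP; apply; apply: (sub_in_cycle (P := [predC [:: p]])) cc; last first.
    by apply/allP => z zc /=; rewrite inE; apply: contraNneq pc => <-.
  move=> x y /=; rewrite !inE => nx ny /adjE [//|[[_ ey]|[ex _]]].
    by move: ny; rewrite ey eqxx.
  by move: nx; rewrite ex eqxx.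
Qed.
End Graph2.
Section Cost.
Variables (R : realType) (d : nat).
Notation point := 'rV[R]_d.
Implicit Types (G : sgraph R d) (f : point -> point).

Lemma cost_gmap f G : is_tree G -> {in sgV G &, injective f} ->
  cost (gmap f G) = \sum_(e <- sgE G) edist (f e.1) (f e.2).
Proof.
move=> T inj; rewrite /cost /=.
rewrite big_imfset; first by [].
move=> [a b] [a2 b2] ab ab2 [e1 e2].
have [a1 b1 _] := tree_edge T ab; have [a21 b21 _] := tree_edge T ab2.
by move: (inj _ _ a1 a21 e1) (inj _ _ b1 b21 e2) => /= -> ->.
Qed.

Lemma cost_addleaf G s p : is_tree G -> p \notin sgV G ->
  cost (addleaf G s p) = (edist s p + cost G)%R.
Proof.
move=> T pV; rewrite /cost /= big_fsetU1 //.
apply/negP => /(tree_edge T) [_ pV' _]; by move: pV; rewrite pV'.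
Qed.
End Cost.
Section Geom.
Variables (R : realType) (d : nat).
Notation point := 'rV[R]_d.
Local Close Scope fset_scope.
Implicit Types (x y z w : point).

Definition dot x y : R := \sum_(i < d) x 0 i * y 0 i.

Lemma edistE x y : edist x y = Num.sqrt (dot (x - y) (x - y)).
Proof. by rewrite /edist /dot; congr Num.sqrt; apply: eq_bigr => i _; rewrite !mxE expr2. Qed.

Lemma dotC x y : dot x y = dot y x.
Proof. by apply: eq_bigr => i _; rewrite mulrC. Qed.

Lemma dot_ge0 x : 0 <= dot x x.
Proof. by apply: sumr_ge0 => i _; rewrite -expr2 sqr_ge0. Qed.

Lemma dot_expand x w (e : R) :
  dot (x - e *: w) (x - e *: w) = dot x x - 2 * e * dot x w + e ^+ 2 * dot w w.
Proof.
rewrite /dot mulr_sumr mulr_sumr -sumrN -!big_split /=; apply: eq_bigr => i _.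
rewrite !mxE; ring.
Qed.

Lemma dot_suml (I : Type) (s : seq I) (F : I -> point) y :
  dot (\sum_(k <- s) F k) y = \sum_(k <- s) dot (F k) y.
Proof.
rewrite /dot; under eq_bigr do rewrite summxE mulr_suml.
by rewrite exchange_big.
Qed.

Lemma dotZl (a : R) x y : dot (a *: x) y = a * dot x y.
Proof. by rewrite /dot mulr_sumr; apply: eq_bigr => i _; rewrite mxE mulrA. Qed.

Lemma dot0l y : dot 0 y = 0.
Proof. by rewrite /dot big1 // => i _; rewrite mxE mul0r. Qed.

Lemma edistC x y : edist x y = edist y x.
Proof. by rewrite /edist; congr Num.sqrt; apply: eq_bigr => i _; rewrite -sqrrN opprB. Qed.

Lemma edist_ge0 x y : 0 <= edist x y.
Proof. exact: sqrtr_ge0. Qed.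

Lemma edist_eq0 x y : edist x y = 0 -> x = y.
Proof.
rewrite edistE => /eqP; rewrite sqrtr_eq0 => h.
have h0 : dot (x - y) (x - y) = 0 by apply/eqP; rewrite eq_le h dot_ge0.
apply/rowP => i; apply/eqP; rewrite -subr_eq0.
have := h0; rewrite /dot => /eqP; rewrite psumr_eq0; last by move=> j _; rewrite -expr2 sqr_ge0.
move=> /allP /(_ i (mem_index_enum _)) /=; rewrite -expr2 sqrf_eq0 !mxE //.
Qed.

Lemma edist_gt0 x y : x != y -> 0 < edist x y.
Proof.
move=> nxy; rewrite lt_neqAle edist_ge0 andbT eq_sym; apply/negP => /eqP /edist_eq0 h.
by move: nxy; rewrite h eqxx.
Qed.

Lemma sqrt_bound x w (e : R) : 0 < dot x x ->
  Num.sqrt (dot (x - e *: w) (x - e *: w)) <=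
  Num.sqrt (dot x x) - e * dot x w / Num.sqrt (dot x x) + e ^+ 2 * dot w w / Num.sqrt (dot x x).
Proof.
move=> A0; rewrite dot_expand.
set A := dot x x; set c := dot x w; set K := dot w w; set r := Num.sqrt A.
have K0 : 0 <= K := dot_ge0 w.
have T0 : 0 <= A - 2 * e * c + e ^+ 2 * K by rewrite /A /c /K -dot_expand dot_ge0.
have r0 : 0 < r by rewrite /r sqrtr_gt0.
have rA : r ^+ 2 = A by rewrite /r sqr_sqrtr // ltW.
have -> : r - e * c / r + e ^+ 2 * K / r = (A - e * c + e ^+ 2 * K) / r.
  by rewrite -rA; field; rewrite gt_eqF.
have y0 : 0 <= (A - e * c + e ^+ 2 * K) / r.
  by apply: divr_ge0; [nra | exact: ltW].
rewrite -[X in _ <= X]ger0_norm // -sqrtr_sqr ler_wsqrtr //.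
rewrite expr_div_n rA ler_pdivlMr //.
have h1 := sqr_ge0 (e * (c - e * K)).
have h2 := mulr_ge0 (sqr_ge0 e) (mulr_ge0 K0 (ltW A0)).
suff -> : (A - e * c + e ^+ 2 * K) ^+ 2 = (A - 2 * e * c + e ^+ 2 * K) * A + ((e * (c - e * K)) ^+ 2 + e ^+ 2 * (K * A)).
  by rewrite lerDl addr_ge0.
ring.
Qed.

Lemma dot_delta x (i : 'I_d) : dot x (delta_mx 0 i) = x 0 i.
Proof.
rewrite /dot (bigD1 i) //= big1 => [|j nji]; rewrite !mxE ?eqxx ?mulr1 ?addr0 //.
by rewrite (negbTE nji) mulr0.
Qed.

Lemma dot_delta2 (i : 'I_d) : dot (delta_mx 0 i) (delta_mx 0 i) = 1 :> R.
Proof. by rewrite dot_delta mxE !eqxx. Qed.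

Lemma dot_if (b : bool) (a : R) x y :
  dot (if b then a *: x else 0) y = if b then a * dot x y else 0.
Proof. by case: b; rewrite ?dotZl ?dot0l. Qed.
End Geom.
Lemma path_cross (T : Type) (e : rel T) (Q : pred T) x s :
  path e x s -> Q x -> ~~ Q (last x s) -> exists y z, [/\ Q y, ~~ Q z & e y z].
Proof.
elim: s x => [|z s IH] x /=; first by move=> _ ->.
move=> /andP [exz pz] qx; case: (boolP (Q z)) => qz.
  exact: IH.
by move=> _; exists x, z.
Qed.

Lemma argmax_seq (T : eqType) (R : realType) (s : seq T) (F : T -> R) x0 :
  x0 \in s -> exists2 m, m \in s & forall y, y \in s -> F y <= F m.
Proof.
elim: s x0 => [|a s IH] x0 //; rewrite inE => _.
case: s IH => [|b s] IH.
  by exists a; rewrite ?inE // => y; rewrite inE => /eqP ->.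
have [m ms mmax] := IH b (mem_head _ _).
case: (lerP (F a) (F m)) => h.
  exists m; first by rewrite inE ms orbT.
  by move=> y; rewrite inE => /orP [/eqP -> | /mmax].
exists a; first by rewrite inE eqxx.
move=> y; rewrite inE => /orP [/eqP -> // | /mmax hy]; exact: (le_trans hy (ltW h)).
Qed.

Lemma fsum_lt (K : choiceType) (R : realType) (E : {fset K}) (g h : K -> R) e0 :
  (forall e, e \in E -> g e <= h e) -> e0 \in E -> g e0 < h e0 ->
  \sum_(e <- E) g e < \sum_(e <- E) h e.
Proof.
move=> le e0E lt0; rewrite (big_fsetD1 e0) // [X in _ < X](big_fsetD1 e0) //=.
apply: ltr_leD => //; rewrite big_seq_cond [X in _ <= X]big_seq_cond.
apply: ler_sum => i /andP [iE _]; apply: le; move: iE; rewrite !inE => /andP [].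
by [].
Qed.

Lemma fsum_le (K : choiceType) (R : realType) (E : {fset K}) (g h : K -> R) :
  (forall e, e \in E -> g e <= h e) ->
  \sum_(e <- E) g e <= \sum_(e <- E) h e.
Proof.
move=> le; rewrite big_seq_cond [X in _ <= X]big_seq_cond.
by apply: ler_sum => i /andP [iE _]; apply: le.
Qed.

Lemma fsum_ge_term (K : choiceType) (R : realType) (E : {fset K}) (P : pred K) (g : K -> R) e0 :
  (forall e, e \in E -> P e -> 0 <= g e) -> e0 \in E -> P e0 ->
  g e0 <= \sum_(e <- E | P e) g e.
Proof.
move=> ge e0E pe0; rewrite big_mkcond (big_fsetD1 e0) //= pe0 lerDl.
rewrite big_seq_cond; apply: sumr_ge0 => i /andP [iE _].
case: ifP => // pi; apply: ge => //; move: iE; rewrite !inE => /andP [].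
by [].
Qed.
Section Box.
Variables (R : realType) (d : nat).
Notation point := 'rV[R]_d.

Lemma edge_of_adj (G : sgraph R d) x y : adj G x y ->
  exists2 e, e \in sgE G & (e.1 = x /\ e.2 = y) \/ (e.1 = y /\ e.2 = x).
Proof.
by case/orP => h; [exists (x, y) => //; left | exists (y, x) => //; right].
Qed.

Lemma box_bound (P : {fset point}) (G : sgraph R d) (i : 'I_d) (sg c : R) :
  sg ^+ 2 = 1 -> optimal_steiner P G -> (exists q, q \in P) ->
  (forall q, q \in P -> sg * q 0 i <= c) ->
  forall v, v \in sgV G -> sg * v 0 i <= c.
Proof.
move=> s2 [[PV T] _ opt] [q qP] hP v vV.
rewrite leNgt; apply/negP => vc.
pose F := fun x : point => sg * x 0 i.
have [m mV mmax] := argmax_seq F vV.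
pose M := F m.
have Mc : c < M by apply: lt_le_trans vc (mmax v vV).
pose H := \sum_(y <- sgV G | F y < M) (M - F y)^-1.
have H0 : 0 <= H.
  by apply: sumr_ge0 => y hy; rewrite invr_ge0 subr_ge0 ltW.
pose eps := (H + 1)^-1.
have eps0 : 0 < eps by rewrite invr_gt0; lra.
have gap : forall y, y \in sgV G -> F y < M -> eps < M - F y.
  move=> y yV yM.
  have hy : (M - F y)^-1 <= H.
    apply: (fsum_ge_term (P := fun y => F y < M) (g := fun y => (M - F y)^-1)) => //.
    by move=> z _ zM; rewrite invr_ge0 subr_ge0 ltW.
  have a0 : 0 < M - F y by rewrite subr_gt0.
  have aa : (M - F y) * (M - F y)^-1 = 1 by rewrite mulfV // gt_eqF.
  rewrite /eps -[X in X < _]mul1r ltr_pdivrMr; last by lra.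
  nra.
pose t := eps * sg.
pose del : point := delta_mx 0 i.
pose phi := fun x : point => if F x == M then x - t *: del else x.
have Fshift : forall x, F (x - t *: del) = F x - eps.
  move=> x; rewrite /F /t !mxE !eqxx /= mulr1.
  have -> : sg * (x 0 i - eps * sg) = sg * x 0 i - eps * sg ^+ 2 by ring.
  by rewrite s2 mulr1.
have FV : forall y, y \in sgV G -> F y != M -> F y < M.
  by move=> y yV; rewrite lt_neqAle mmax // andbT.
have inj : {in sgV G &, injective phi}.
  have mixed : forall x y, x \in sgV G -> y \in sgV G -> F x == M -> F y != M ->
      x - t *: del != y.
    move=> x y xV yV /eqP xM yM; apply/eqP => exy.
    have := gap y yV (FV y yV yM); rewrite -exy Fshift xM; lra.
  move=> x y xV yV; rewrite /phi.
  case: ifP => hx; case: ifP => hy.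
  - by move/addIr.
  - by move=> e; move: (mixed x y xV yV hx (negbT hy)); rewrite e eqxx.
  - by move=> e; move: (mixed y x yV xV hy (negbT hx)); rewrite e eqxx.
  - by [].
have PS : forall q, q \in P -> phi q = q.
  move=> z zP; rewrite /phi; case: ifP => // /eqP zM.
  by have : F z <= c := hP z zP; rewrite zM => h; exfalso; lra.
have ST : steiner_tree P (gmap phi G).
  split; last exact: gmap_tree.
  apply/fsubsetP => z zP; rewrite /= -(PS z zP); apply: in_imfset.
  exact: (fsubsetP PV).
have edge_lt : forall x y, x \in sgV G -> y \in sgV G -> F x = M -> F y < M ->
    edist (phi x) (phi y) < edist x y.
  move=> x y xV yV xM yM; rewrite /phi xM eqxx (lt_eqF yM) !edistE.
  have -> : x - t *: del - y = (x - y) - t *: del.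
    by apply/rowP => j; rewrite !mxE; ring.
  have a0 := dot_ge0 ((x - y) - t *: del).
  rewrite dot_expand dot_delta dot_delta2 in a0 *.
  have e1 : t * (x - y) 0 i = eps * (M - F y).
    by rewrite -xM /F /t !mxE; have := s2; nra.
  have e2 : t ^+ 2 = eps ^+ 2 by rewrite /t exprMn s2 mulr1.
  have g := gap y yV yM.
  rewrite ltr_sqrt; nra.
have edge_le : forall x y, x \in sgV G -> y \in sgV G -> edist (phi x) (phi y) <= edist x y.
  move=> x y xV yV.
  case hx: (F x == M); case hy: (F y == M).
  - rewrite /phi hx hy !edistE.
    have -> : x - t *: del - (y - t *: del) = x - y by apply/rowP => j; rewrite !mxE; ring.
    by [].
  - apply: ltW; apply: edge_lt => //; first exact/eqP.
    by apply: FV => //; rewrite hy.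
  - rewrite edistC [X in _ <= X]edistC; apply: ltW; apply: edge_lt => //; first exact/eqP.
    by apply: FV => //; rewrite hx.
  - by rewrite /phi hx hy.
have [s0 [ps ls]] := (match T with And4 _ _ h3 _ => h3 end) m q mV (fsubsetP PV q qP).
have qn : ~~ (F (last m s0) == M).
  by rewrite ls; apply/negP => /eqP qM; have : F q <= c := hP q qP; rewrite qM; lra.
have [y [z [yM zM yz]]] := path_cross (Q := fun x => F x == M) ps (eqxx _) qn.
have [yV zV] := adj_in T yz.
have yM' : F y = M by apply/eqP.
have zM' : F z < M by apply: FV.
have [e0 e0E he0] := edge_of_adj yz.
have := opt _ ST; rewrite cost_gmap // /cost.
apply/negP; rewrite -ltNge.
apply: (fsum_lt (e0 := e0)) => //.
  by move=> e eE; have [? ? _] := tree_edge T eE; apply: edge_le.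
case: he0 => [[-> ->] | [-> ->]]; first exact: edge_lt.
by rewrite edistC [X in _ < X]edistC; apply: edge_lt.
Qed.
End Box.
Section Split.
Variables (R : realType) (d : nat).
Notation point := 'rV[R]_d.
Local Close Scope fset_scope.

Lemma split_improve (P : {fset point}) (G : sgraph R d) (p : point) :
  optimal_steiner P G -> p \in sgV G ->
  (forall x y, x \in sgV G -> y \in sgV G -> 0 <= dot (x - p) (y - p)) ->
  (2 : R) <= \sum_(e <- sgE G) ((e.1 == p) || (e.2 == p))%:R -> False.
Proof.
move=> [[PV T] _ optc] pV orth deg2.
pose pe := fun e : point * point => (e.1 == p) || (e.2 == p).
pose o := fun e : point * point => if e.1 == p then e.2 else e.1.
have oprop : forall e, e \in sgE G -> pe e ->
    [/\ o e \in sgV G, o e != p & edist e.1 e.2 = edist (o e) p].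
  move=> e eE; have [e1 e2 ne] := tree_edge T eE; rewrite /pe /o.
  case: ifP => [/eqP h1 _ | h1 /= h2]; first by rewrite -h1 eq_sym ne edistC.
  by rewrite (eqP h2) e1 h1.
pose u := fun e => o e - p.
pose r := fun e => edist (o e) p.
have rE : forall e, r e = Num.sqrt (dot (u e) (u e)) by move=> e; rewrite /r edistE.
have r0 : forall e, e \in sgE G -> pe e -> 0 < r e.
  by move=> e eE pee; have [_ ? _] := oprop e eE pee; apply: edist_gt0.
pose w := \sum_(e <- sgE G) (if pe e then (r e)^-1 *: u e else 0).
pose K := dot w w.
have KE : K = \sum_(e <- sgE G) (if pe e then (r e)^-1 * dot (u e) w else 0).
  by rewrite /K {1}/w dot_suml; apply: eq_bigr => e _; rewrite dot_if.
have K2 : 2 <= K.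
  apply: (le_trans deg2); rewrite KE; apply: fsum_le => e eE.
  rewrite /pe; case: ifP => // pee.
  have r0e := r0 e eE pee.
  have ue2 : dot (u e) (u e) = r e ^+ 2 by rewrite rE sqr_sqrtr // dot_ge0.
  have : r e <= dot (u e) w.
    rewrite dotC /w dot_suml.
    have nn : forall f, f \in sgE G -> true -> 0 <= dot (if pe f then (r f)^-1 *: u f else 0) (u e).
      move=> f fE _; rewrite dot_if; case: ifP => // pf; apply: mulr_ge0.
        by rewrite invr_ge0 ltW // r0.
      by have [? _ _] := oprop f fE pf; have [? _ _] := oprop e eE pee; apply: orth.
    have := fsum_ge_term (P := xpredT) nn eE isT.
    rewrite dot_if (_ : pe e = true) // => h; apply: le_trans h.
    by rewrite ue2 expr2 mulrA mulVf ?mul1r // gt_eqF.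
  by move=> h; rewrite mulrC ler_pdivlMr // mul1r.
pose sK := Num.sqrt K.
have K0 : 0 <= K by lra.
have sK2 : sK ^+ 2 = K by rewrite sqr_sqrtr.
have sK0 : 0 <= sK by apply: sqrtr_ge0.
have sK1 : 1 < sK by nra.
pose a := K - sK.
have a0 : 0 < a by rewrite /a; nra.
pose L := \sum_(e <- sgE G) (if pe e then (r e)^-1 else 0).
have L0 : 0 <= L.
  apply: sumr_ge0 => e _; case: ifP => // _; rewrite invr_ge0; apply: edist_ge0.
pose Hd := \sum_(v <- sgV G | v != p) (edist v p)^-1.
have Hd0 : 0 <= Hd by apply: sumr_ge0 => v _; rewrite invr_ge0 edist_ge0.
pose B := K * L.
pose C := sK * Hd.
have B0 : 0 <= B by apply: mulr_ge0.
have C0 : 0 <= C by apply: mulr_ge0.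
pose eps := a / ((B + 1) * (a * C + 1)).
have aC0 : 0 <= a * C by apply: mulr_ge0 => //; exact: ltW.
have den0 : 0 < (B + 1) * (a * C + 1) by apply: mulr_gt0; lra.
have eps0 : 0 < eps by apply: divr_gt0.
have epsE : eps * ((B + 1) * (a * C + 1)) = a by rewrite /eps mulfVK // gt_eqF.
have epsB : eps * B < a.
  have h1 : 0 <= eps * B * (a * C) by apply: mulr_ge0 => //; apply: mulr_ge0 => //; exact: ltW.
  nra.
have epsC : eps * C < 1.
  have h1 : 0 <= eps * B * (a * C + 1).
    by apply: mulr_ge0; [apply: mulr_ge0 => //; exact: ltW | lra].
  have h3 : eps * C * a < a by nra.
  nra.
pose s := p + eps *: w.
have sp : s - p = eps *: w by rewrite /s addrAC subrr add0r.
have dsp : edist s p = eps * sK.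
  rewrite edistE sp dotZl dotC dotZl -/K mulrA -expr2 sqrtrM ?sqr_ge0 //.
  by rewrite sqrtr_sqr ger0_norm // ltW.
have snp : s != p.
  apply/negP => /eqP e; move: dsp; rewrite e.
  have -> : edist p p = 0 by rewrite edistE subrr dot0l sqrtr0.
  move=> h; have : 0 < eps * sK by apply: mulr_gt0 => //; lra.
  by rewrite -h ltxx.
have sV : s \notin sgV G.
  apply/negP => sV.
  have : (edist s p)^-1 <= Hd.
    apply: (fsum_ge_term (P := fun v => v != p) (g := fun v => (edist v p)^-1)) => //.
    by move=> v _ _; rewrite invr_ge0 edist_ge0.
  rewrite dsp => h.
  have h0 : 0 < eps * sK by apply: mulr_gt0 => //; lra.
  have : 1 <= eps * sK * Hd.
    by have := ler_wpM2l (ltW h0) h; rewrite mulfV // gt_eqF.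
  rewrite /C in epsC; lra.
pose phi := fun x : point => if x == p then s else x.
have inj : {in sgV G &, injective phi}.
  move=> x y xV yV; rewrite /phi.
  case: ifP => [/eqP -> | hx]; case: ifP => [/eqP -> | hy] //.
  - by move=> e; move: sV; rewrite e yV.
  - by move=> e; move: sV; rewrite -e xV.
have pnim : p \notin (phi @` sgV G)%fset.
  apply/negP => /imfsetP [v vV]; rewrite /phi; case: ifP => [_ | /negbT hv] e.
    by move: snp; rewrite e eqxx.
  by move: hv; rewrite e eqxx.
have sim : s \in (phi @` sgV G)%fset.
  by have := in_imfset _ phi pV; rewrite /phi eqxx.
pose G2 := addleaf (gmap phi G) s p.
have ST : steiner_tree P G2.
  split; last by apply: addleaf_tree => //; apply: gmap_tree.
  apply/fsubsetP => q qP; rewrite /G2 /=; case: (q =P p) => [-> | /eqP qp].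
    by rewrite fsetU11.
  rewrite inE; apply/orP; right; have -> : q = phi q by rewrite /phi (negbTE qp).
  by apply: in_imfset; apply: (fsubsetP PV).
have cG2 : cost G2 = (eps * sK + \sum_(e <- sgE G) edist (phi e.1) (phi e.2))%R.
  by rewrite /G2 cost_addleaf // ?cost_gmap // ?dsp //; apply: gmap_tree.
have edge : forall e, e \in sgE G -> edist (phi e.1) (phi e.2) <=
    edist e.1 e.2 - (if pe e then eps * ((r e)^-1 * dot (u e) w) - eps ^+ 2 * K * (r e)^-1 else 0).
  move=> e eE; have [_ _ ne] := tree_edge T eE; case peE: (pe e); last first.
    move: peE; rewrite /pe => /norP [h1 h2].
    by rewrite subr0 /phi (negbTE h1) (negbTE h2).
  have [oV onp ed] := oprop e eE peE; rewrite ed -/(r e).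
  have key : edist (phi e.1) (phi e.2) = Num.sqrt (dot (u e - eps *: w) (u e - eps *: w)).
    move: peE; rewrite /pe /phi /u /o.
    case: ifP => [/eqP h1 _ | h1 /= /eqP h2].
      have h2 : (e.2 == p) = false by apply/negbTE; rewrite -h1 eq_sym.
      rewrite h2 edistC edistE.
      by congr (Num.sqrt (dot _ _)); apply/rowP => j; rewrite !mxE; ring.
    rewrite h2 eqxx edistE.
    by congr (Num.sqrt (dot _ _)); apply/rowP => j; rewrite !mxE; ring.
  rewrite key.
  have ue0 : 0 < dot (u e) (u e) by rewrite -sqrtr_gt0 -rE; apply: r0.
  have := sqrt_bound w eps ue0; rewrite -rE -/K => h; apply: (le_trans h).
  by rewrite le_eqVlt; apply/orP; left; apply/eqP; ring.
have sumb : \sum_(e <- sgE G) edist (phi e.1) (phi e.2) <= cost G - (eps * K - eps ^+ 2 * K * L).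
  apply: (le_trans (fsum_le edge)); rewrite sumrB /cost.
  have -> : \sum_(e <- sgE G) (if pe e then eps * ((r e)^-1 * dot (u e) w) - eps ^+ 2 * K * (r e)^-1 else 0)
     = eps * K - eps ^+ 2 * K * L.
    rewrite KE /L !mulr_sumr -sumrB; apply: eq_bigr => e _.
    by case: (pe e); rewrite ?mulr0 ?subr0.
  by [].
have := optc _ ST; rewrite cG2 => hc.
have hpos : 0 < eps * (a - eps * B) by apply: mulr_gt0 => //; rewrite subr_gt0.
rewrite /B /a in hpos.
nra.
Qed.
End Split.
Theorem mainTheorem4 (R : realType) (d : nat) (P : {fset 'rV[R]_d})
    (p : 'rV[R]_d) :
  (1 < #|` P|)%N ->
  p \in P ->
  (forall i : 'I_d, (forall q, q \in P -> q 0 i <= p 0 i) \/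
                    (forall q, q \in P -> p 0 i <= q 0 i)) ->
  forall G : sgraph R d, optimal_steiner P G -> degree G p = 1%N.
Proof.
move=> P1 pP hyp G opt; have opt' := opt; case: opt' => [[PV T] _ optc].
have pV : p \in sgV G by apply: (fsubsetP PV).
have exP : exists q, q \in P by exists p.
have orth : forall x y, x \in sgV G -> y \in sgV G -> (0 <= dot (x - p) (y - p))%R.
  move=> x y xV yV; apply: sumr_ge0 => i _; rewrite !mxE.
  case: (hyp i) => h.
  - have hb := box_bound (i := i) (sg := 1) (c := p 0 i) (expr1n _ _) opt exP.
    have hq : forall q, q \in P -> (1 * q 0 i <= p 0 i)%R.
      by move=> q qP; rewrite mul1r; apply: h.
    have bx := hb hq x xV; have by_ := hb hq y yV.
    rewrite !mul1r in bx by_; nra.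
  - have s2 : ((-1) ^+ 2 = 1 :> R)%R by rewrite sqrrN expr1n.
    have hb := box_bound (i := i) (sg := -1) (c := - p 0 i) s2 opt exP.
    have hq : forall q, q \in P -> (-1 * q 0 i <= - p 0 i)%R.
      by move=> q qP; rewrite mulN1r lerN2; apply: h.
    have bx := hb hq x xV; have by_ := hb hq y yV.
    rewrite !mulN1r !lerN2 in bx by_; nra.
pose pe := fun e : 'rV[R]_d * 'rV[R]_d => (e.1 == p) || (e.2 == p).
have degE : ((degree G p)%:R = \sum_(e <- sgE G) (pe e)%:R :> R)%R.
  rewrite /degree card_fset_sum1 -big_fset_condE natr_sum big_mkcond /=.
  by apply: eq_bigr => e _; rewrite /pe; case: ifP.
have [q qP qp] : exists2 q, q \in P & q != p.
  have : ~~ (P `<=` [fset p]).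
    by apply/negP => /fsubset_leq_card; rewrite cardfs1 leqNgt P1.
  by case/fsubsetPn => q qP; rewrite inE => qp; exists q.
have [s0 [ps ls]] := (match T with And4 _ _ h3 _ => h3 end) p q pV (fsubsetP PV q qP).
case: s0 ps ls => [|x s0] /=; first by move=> _ e; move: qp; rewrite -e eqxx.
move=> /andP [px _] _.
have [e0 e0E he0] := edge_of_adj px.
have pe0 : pe e0 by rewrite /pe; case: he0 => [[-> _]|[_ ->]]; rewrite eqxx ?orbT.
have nn : forall e, e \in sgE G -> xpredT e -> (0 <= (pe e)%:R :> R)%R.
  by move=> e _ _; apply: ler0n.
have ge1 : (1 <= (degree G p)%:R :> R)%R.
  rewrite degE; have := fsum_ge_term nn e0E isT.
  by rewrite pe0.
have lt2 : ~ (2%:R <= (degree G p)%:R :> R)%R.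
  by rewrite degE => h; exact: (split_improve opt pV orth h).
move: ge1 lt2; rewrite ler1n ler_nat => h1 h2.
apply/eqP; rewrite eqn_leq h1 andbT leqNgt; apply/negP => h; apply: h2; exact: h.
Qed.
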